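(* Let $k\ge1$ and let $\psi:\mathbb{Z}^k\to\mathbb{Z}^k$ be an automorphism. (i) If some nonzero $r\in\mathbb{Z}^k$ has $\psi$-orbit of cardinality $c$ (finite or infinite), then there exist infinitely many distinct $\psi$-orbits of cardinality $c$. (ii) If $R(\psi)<\infty$, then $0$ is the only fixed point of $\psi$, i.e. there is a unique one-point orbit.
   Context: For an automorphism $\psi$ of an abelian group $G$, $R(\psi)$ is the number of Reidemeister classes, i.e. classes of the relation $g\sim g+h-\psi(h)$, $h\in G$. *)

(* Defs.v *)
From HB Require Import structures.
From mathcomp Require Import all_boot all_order all_algebra.
From mathcomp Require Import boolp classical_sets cardinality.
Set Implicit Arguments. Unset Strict Implicit. Unset Printing Implicit Defensive.
Import GRing.Theory.
Local Open Scope ring_scope.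
Local Open Scope classical_set_scope.

Notation Zk k := 'rV[int]_k.

Definition is_aut (k : nat) (psi : Zk k -> Zk k) : Prop :=
  (forall x y, psi (x + y) = psi x + psi y) /\ bijective psi.

(* The psi-orbit of r: { psi^n r | n in Z }, i.e. x with psi^n r = x or psi^n x = r. *)
Definition zorbit (k : nat) (psi : Zk k -> Zk k) (r : Zk k) : set (Zk k) :=
  [set x | exists n : nat, iter n psi r = x \/ iter n psi x = r].

Definition orbits (k : nat) (psi : Zk k -> Zk k) : set (set (Zk k)) :=
  [set O | exists r, O = zorbit psi r].

Definition reid_class (k : nat) (psi : Zk k -> Zk k) (g : Zk k) : set (Zk k) :=
  [set x | exists h, x = g + h - psi h].

Definition reid_classes (k : nat) (psi : Zk k -> Zk k) : set (set (Zk k)) :=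
  [set C | exists g, C = reid_class psi g].

Definition reid_finite (k : nat) (psi : Zk k -> Zk k) : Prop :=
  finite_set (reid_classes psi).

(* Main.v *)
Require Import Defs.
From mathcomp Require Import all_boot all_order all_algebra.
From mathcomp Require Import boolp classical_sets cardinality.
From mathcomp Require Import zify ring.
Set Implicit Arguments. Unset Strict Implicit.
Import Order.TTheory GRing.Theory Num.Theory.
Local Open Scope ring_scope.
Local Open Scope classical_set_scope.

Section Gen.
Variable k : nat.
Notation V := 'rV[int]_k.
Definition addf (f : V -> V) := forall x y, f (x + y) = f x + f y.

Lemma addf0 f : addf f -> f 0 = 0.
Proof. by move=> H; have := H 0 0; rewrite addr0 => E; apply/(addrI (f 0)); rewrite -E addr0. Qed.

Lemma addfMn f : addf f -> forall x n, f (x *+ n) = f x *+ n.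
Proof. by move=> H x; elim=> [|n IH]; rewrite ?addf0 // !mulrS H IH. Qed.

Lemma addfN f : addf f -> forall x, f (- x) = - f x.
Proof. by move=> H x; apply/eqP; rewrite -subr_eq0 opprK -H addNr addf0. Qed.

Lemma addfZ f : addf f -> forall (c : int) x, f (c *: x) = c *: f x.
Proof.
move=> H c x; rewrite -[c]intz !scaler_int.
by case: c => n; rewrite ?NegzE ?mulrNz ?addfN // -!pmulrn addfMn.
Qed.

Lemma iter_add f : addf f -> forall n, addf (iter n f).
Proof. by move=> H; elim=> [|n IH] x y //=; rewrite IH H. Qed.

Lemma mxn_cancel (x y : V) m : (0 < m)%N -> x *+ m = y *+ m -> x = y.
Proof.
move=> m0 E; apply/matrixP => i j; have := congr1 (fun M : V => M i j) E.
rewrite !mulmxnE => /eqP; rewrite -subr_eq0 -mulrnBl mulrn_eq0 subr_eq0.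
by rewrite -[m == 0%N]negbK -lt0n m0 /= => /eqP.
Qed.

Lemma noscal f c r : addf f -> (1 < c)%N -> r = f r *+ c -> r = 0.
Proof.
move=> H c1 E.
have It : forall t, r = iter t f r *+ (c ^ t).
  elim=> [|t IH]; first by rewrite expn0 mulr1n.
  transitivity (iter t f (f r *+ c) *+ c ^ t); first by rewrite -E.
  by rewrite (addfMn (iter_add H t)) -iterSr -mulrnA -expnS.
apply/eqP; apply: contraT => /matrix0Pn [i [j nz]].
have := congr1 (fun M : V => M i j) (It `|r i j|%N).
rewrite mulmxnE => E2.
have EA : (`|r i j| = `|iter `|r i j| f r i j| * c ^ `|r i j|)%N.
  by rewrite {1}E2 -mulr_natr abszM natz.
have nz2 : (0 < `|iter `|r i j| f r i j|)%N.
  rewrite absz_gt0; by apply: contraNneq nz => z; rewrite E2 z mul0rn.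
have AC := ltn_expl `|r i j| c1.
have := leq_pmull (c ^ `|r i j|) nz2; rewrite -EA.
by rewrite leqNgt AC.
Qed.

Lemma addf_inv (f g : V -> V) : addf f -> cancel f g -> cancel g f -> addf g.
Proof. by move=> H K1 K2 x y; apply: (can_inj K1); rewrite H !K2. Qed.

Lemma iter_can T (f g : T -> T) : cancel f g -> forall n, cancel (iter n f) (iter n g).
Proof. by move=> K; elim=> [|n IH] x //; rewrite iterSr iterS K IH. Qed.

Lemma orbit_scale (f g : V -> V) r m : addf f -> cancel f g -> cancel g f ->
  (0 < m)%N -> zorbit f (r *+ m) = (fun y => y *+ m) @` zorbit f r.
Proof.
move=> H K1 K2 m0; apply/seteqP; split => x.
- case=> n [A|B].
    by exists (iter n f r); [exists n; left | rewrite -A (addfMn (iter_add H n))].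
  exists (iter n g r); first by exists n; right; rewrite (iter_can K2).
  apply: (can_inj (iter_can K1 n)); rewrite (addfMn (iter_add H n)) B.
  by rewrite (iter_can K2).
- case=> y [n [A|B]] <-.
    by exists n; left; rewrite (addfMn (iter_add H n)) A.
  by exists n; right; rewrite (addfMn (iter_add H n)) B.
Qed.

Lemma inj_infinite T (S : set T) (f : nat -> T) :
  injective f -> (forall n, S (f n)) -> infinite_set S.
Proof.
move=> fi fS; apply: (@sub_infinite_set _ (f @` setT)).
  by move=> _ [n _ <-].
rewrite (eq_finite_set (inj_card_eq _)); first exact: infinite_nat.
by move=> ? ? _ _; apply: fi.
Qed.

Lemma part1 (f g : V -> V) (r : V) : addf f -> cancel f g -> cancel g f -> r != 0 ->
  infinite_set [set O | orbits f O /\ (O #= zorbit f r)%card].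
Proof.
move=> H K1 K2 rnz; have Hg := addf_inv H K1 K2.
apply: (@inj_infinite _ _ (fun j => zorbit f (r *+ 2 ^ j))); last first.
  move=> j; split; first by exists (r *+ 2 ^ j).
  rewrite (orbit_scale r H K1 K2) ?expn_gt0 //; apply: inj_card_eq.
  by move=> x y _ _; apply: mxn_cancel; rewrite expn_gt0.
have key : forall j1 j2, (j1 < j2)%N ->
    zorbit f (r *+ 2 ^ j1) <> zorbit f (r *+ 2 ^ j2).
  move=> j1 j2 lt E.
  have : zorbit f (r *+ 2 ^ j1) (r *+ 2 ^ j2) by rewrite E; exists 0%N; left.
  set c := (2 ^ (j2 - j1))%N.
  have c1 : (1 < c)%N by rewrite /c -{1}(expn0 2) ltn_exp2l // subn_gt0.
  have e2 : r *+ 2 ^ j2 = (r *+ c) *+ 2 ^ j1.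
    by rewrite -mulrnA -expnD subnK // ltnW.
  rewrite e2 => -[n [A|B]].
  - move: A; rewrite (addfMn (iter_add H n)) => /mxn_cancel.
    rewrite expn_gt0 => /(_ isT) A.
    apply: (negP rnz); apply/eqP; apply: (noscal (f:=iter n g) (c:=c)) => //; first exact: iter_add.
    by rewrite -(addfMn (iter_add Hg n)) -A (iter_can K1).
  - move: B; rewrite (addfMn (iter_add H n)) (addfMn (iter_add H n)) => /mxn_cancel.
    rewrite expn_gt0 => /(_ isT) B.
    apply: (negP rnz); apply/eqP; apply: (noscal (f:=iter n f) (c:=c)) => //; first exact: iter_add.
move=> j1 j2 E; case: (ltngtP j1 j2) => // l.
  by case: (key _ _ l E).
by case: (key _ _ l (esym E)).
Qed.

Lemma psi_mx (f : V -> V) : addf f ->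
  forall x, f x = x *m (\matrix_(i, j) f (delta_mx 0 i) 0 j).
Proof.
move=> H x; rewrite {1}(row_sum_delta x) (big_morph f H (addf0 H)) mulmx_sum_row.
apply: eq_bigr => j _; rewrite addfZ //; congr (_ *: _).
by apply/rowP => l; rewrite !mxE.
Qed.

Lemma part2 (f : V -> V) : addf f -> finite_set (reid_classes f) ->
  forall x, f x = x -> x = 0.
Proof.
move=> H fin x fx; apply/eqP; apply: contraT => xnz.
set A := \matrix_(i, j) f (delta_mx 0 i) 0 j.
have fA := psi_mx H.
set M : 'M[int]_k := 1%:M - A.
have LM : forall h, h - f h = h *m M by move=> h; rewrite mulmxBr mulmx1 fA.
have xM : x *m M = 0 by rewrite -LM fx subrr.
have dM : \det M = 0.
  apply/eqP; apply: contraT => dnz; suff : x == 0 by rewrite (negbTE xnz).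
  have := congr1 (mulmx^~ (\adj M)) xM.
  rewrite mul0mx -mulmxA mul_mx_adj mul_mx_scalar => /eqP.
  by rewrite scalemx_eq0 (negbTE dnz).
pose Mq := map_mx (intr : int -> rat) M^T.
have : \det Mq == 0 by rewrite det_map_mx det_tr dM rmorph0.
case/det0P => v vnz vM.
pose d j := \prod_(l < k | l != j) denq (v 0 l).
pose w : 'rV[int]_k := \row_j (d j * numq (v 0 j)).
pose D : rat := (\prod_(l < k) denq (v 0 l))%:~R.
have Dnz : D != 0.
  by rewrite intr_eq0 gt_eqF // prodr_gt0 // => l _; rewrite denq_gt0.
have wv : map_mx intr w = D *: v.
  apply/rowP => j; rewrite !mxE intrM numqE /D (bigD1 j) //= intrM.
  by rewrite /d; ring.
have wnz : w != 0.
  apply: contraNneq vnz => w0.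
  have : map_mx (intr : int -> rat) w = 0 by rewrite w0 map_mx0.
  by rewrite wv => /eqP; rewrite scalemx_eq0 (negbTE Dnz).
have wM : w *m M^T = 0.
  have E : map_mx (intr : int -> rat) (w *m M^T) = 0.
    by rewrite map_mxM wv -scalemxAl vM scaler0.
  apply/matrixP => a b; move/matrixP: E => /(_ a b); rewrite !mxE.
  by move/eqP; rewrite intr_eq0 => /eqP.
have Mw : M *m w^T = 0 by rewrite -[M]trmxK -trmx_mul wM trmx0.
case/matrix0Pn: wnz => i0 [i]; rewrite [i0]ord1 => wi.
have val : forall (t : nat) (h : V),
    (((t%:R : int) *: delta_mx 0 i + h *m M) *m w^T) 0 0 = t%:R * w 0 i.
  move=> t h; rewrite mulmxDl -mulmxA Mw mulmx0 addr0 -scalemxAl -rowE.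
  by rewrite !mxE.
suff : infinite_set (reid_classes f) by move/(_ fin).
apply: (@inj_infinite _ _ (fun t : nat => reid_class f ((t%:R : int) *: delta_mx 0 i))).
  move=> s t E.
  have : reid_class f ((t%:R : int) *: delta_mx 0 i) ((s%:R : int) *: delta_mx 0 i).
    by rewrite -E; exists 0; rewrite (addf0 H) addr0 subr0.
  case=> h E2.
  have := val s 0; rewrite mul0mx addr0 E2 -addrA LM val.
  by move/mulIf => /(_ wi)/eqP; rewrite eqr_nat => /eqP.
by move=> t; exists ((t%:R : int) *: delta_mx 0 i).
Qed.
End Gen.

Theorem lemma3p3 (k : nat) (psi : 'rV[int]_k -> 'rV[int]_k) :
  (0 < k)%N -> is_aut psi ->
  (forall r : 'rV[int]_k, r != 0 ->
     infinite_set [set O | orbits psi O /\ (O #= zorbit psi r)%card])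
  /\
  (reid_finite psi -> (forall x : 'rV[int]_k, psi x = x -> x = 0) /\
     orbits psi `&` [set O | exists x, O = [set x]] = [set [set 0]]).
Proof.
move=> _ [Hadd [g K1 K2]]; split.
  by move=> r rnz; exact: (part1 Hadd K1 K2 rnz).
move=> fin; have fix0 := part2 Hadd fin; split => //.
have z0 : zorbit psi 0 = [set 0].
  apply/seteqP; split => y /=.
    case=> n [A|B]; first by rewrite -A (addf0 (iter_add Hadd n)).
    apply: (can_inj (iter_can K1 n)); by rewrite B (addf0 (iter_add Hadd n)).
  by move=> ->; exists 0%N; left.
apply/seteqP; split.
  move=> O [[r ->] [x E]] /=.
  have rx : r = x.
    have : zorbit psi r r by exists 0%N; left.
    by rewrite E.
  have : zorbit psi r (psi r) by exists 1%N; left.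
  rewrite E /= -rx => /fix0 r0.
  by rewrite r0.
move=> O /= ->; split; first by exists 0; rewrite z0.
by exists 0.
Qed.
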